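(* Let $X\subset\mathbb{Z}^2$ be a simple closed $4$-curve with $4$ elements ($SC_4^{2,4}$, with the $4$-adjacency) and $Y\subset\mathbb{Z}^2$ a simple closed $8$-curve with $6$ elements ($SC_8^{2,6}$, with the $8$-adjacency). Then for no $k\in\{8,32,64,80\}$ (i.e. $k=k(t,4)$, $t\in\{1,2,3,4\}$) is the $k$-adjacency of $\mathbb{Z}^4$ on $X\times Y$ normal with respect to the given adjacencies of $X$ and $Y$.
   Context: For $t\in[1,n]$, distinct $p,q\in\mathbb{Z}^n$ are $k(t,n)$-adjacent if $|p_i-q_i|\le1$ for all $i$ and $p_i\ne q_i$ for at most $t$ indices; $k(t,n)=\sum_{i=1}^t 2^i\binom{n}{i}$ (so $4=k(1,2)$, $8=k(2,2)$; $k(1,4)=8,k(2,4)=32,k(3,4)=64,k(4,4)=80$). A simple closed $k$-curve with $l\ge4$ elements in $\mathbb{Z}^n$, denoted $SC_k^{n,l}$, is a set $\{y_0,\dots,y_{l-1}\}$ of $l$ distinct points such that $y_i,y_j$ are $k$-adjacent iff $i-j\equiv\pm1\pmod l$. For $X\subset\mathbb{Z}^{n_1}$ with $k_1$-adjacency and $Y\subset\mathbb{Z}^{n_2}$ with $k_2$-adjacency, a $k$-adjacency of $\mathbb{Z}^{n_1+n_2}$ is normal on $X\times Y$ if for all distinct $(x,y),(x',y')\in X\times Y$: they are $k$-adjacent iff ($x=x'$ and $y,y'$ $k_2$-adjacent) or ($y=y'$ and $x,x'$ $k_1$-adjacent) or ($x,x'$ $k_1$-adjacent and $y,y'$ $k_2$-adjacent).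 *)

(* Defs.v *)
From mathcomp Require Import all_boot all_order all_algebra.
Unset Printing Implicit Defensive.
Import Order.TTheory GRing.Theory Num.Theory.
Local Open Scope ring_scope.

Definition pt (n : nat) := 'I_n -> int.

Definition kadj (t n : nat) (p q : pt n) : Prop :=
  p <> q /\ (forall i, `|p i - q i| <= 1) /\
  (#|[set i : 'I_n | p i != q i]| <= t)%N.

Definition is_SC (t n l : nat) (X : pt n -> Prop) : Prop :=
  (4 <= l)%N /\
  exists y : 'I_l -> pt n,
    injective y /\ (forall p, X p <-> exists i, y i = p) /\
    forall i j : 'I_l,
      kadj t n (y i) (y j) <->
      ((i : nat) = (j.+1 %% l)%N \/ (j : nat) = (i.+1 %% l)%N).

Definition cat_pt (n1 n2 : nat) (x : pt n1) (y : pt n2) : pt (n1 + n2) :=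
  fun i => match split i with inl j => x j | inr j => y j end.

Definition normal_adj (t n1 n2 t1 t2 : nat) (X : pt n1 -> Prop) (Y : pt n2 -> Prop)
  : Prop :=
  forall x y x' y', X x -> Y y -> X x' -> Y y' -> (x, y) <> (x', y') ->
    (kadj t (n1 + n2) (cat_pt n1 n2 x y) (cat_pt n1 n2 x' y') <->
     ((x = x' /\ kadj t2 n2 y y') \/ (y = y' /\ kadj t1 n1 x x') \/
      (kadj t1 n1 x x' /\ kadj t2 n2 y y'))).

(* Main.v *)
Require Import Defs.
From mathcomp Require Import all_boot all_order all_algebra zify.
From Stdlib Require Import FunctionalExtensionality Classical.
Import Order.TTheory GRing.Theory Num.Theory.
Local Open Scope ring_scope.

Definition o1 : 'I_2 := @Ordinal 2 1 isT.

Lemma card_I2 (P : pred 'I_2) : #|[set i | P i]| = (P ord0 + P o1)%N.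
Proof.
rewrite -sum1dep_card big_mkcond /= !big_ord_recl big_ord0 /= addn0.
have -> : lift ord0 ord0 = o1 :> 'I_2 by apply/val_inj.
by case: (P ord0); case: (P o1).
Qed.

Lemma cat_l (x y : pt 2) j : cat_pt 2 2 x y (lshift 2 j) = x j.
Proof. by rewrite /cat_pt (unsplitK (inl j)). Qed.
Lemma cat_r (x y : pt 2) j : cat_pt 2 2 x y (rshift 2 j) = y j.
Proof. by rewrite /cat_pt (unsplitK (inr j)). Qed.

Lemma card_cat (x y x' y' : pt 2) :
  #|[set i | cat_pt 2 2 x y i != cat_pt 2 2 x' y' i]| =
  ((x ord0 != x' ord0) + (x o1 != x' o1) + ((y ord0 != y' ord0) + (y o1 != y' o1)))%N.
Proof.
rewrite -sum1dep_card big_mkcond /= big_split_ord /= !big_ord_recl !big_ord0 /=.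
rewrite !cat_l !cat_r.
have -> : lift ord0 ord0 = o1 :> 'I_2 by apply/val_inj.
by case: (_ != _); case: (_ != _); case: (_ != _); case: (_ != _).
Qed.

Lemma norm_cat (x y x' y' : pt 2) :
  (forall j, `|x j - x' j| <= 1) -> (forall j, `|y j - y' j| <= 1) ->
  forall i, `|cat_pt 2 2 x y i - cat_pt 2 2 x' y' i| <= 1.
Proof.
move=> hx hy i; rewrite /cat_pt; case: (split i) => j; [exact: hx | exact: hy].
Qed.

Lemma ne_coord (x x' : pt 2) : x <> x' -> x ord0 <> x' ord0 \/ x o1 <> x' o1.
Proof.
move=> ne; apply: NNPP => H; apply: ne.
apply: functional_extensionality => -[[|[|n]] Hn].
- have -> : Ordinal Hn = ord0 by apply/val_inj. by apply: NNPP => h; apply: H; left.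
- have -> : Ordinal Hn = o1 by apply/val_inj. by apply: NNPP => h; apply: H; right.
- by [].
Qed.

Lemma kadj2 t (p q : pt 2) : kadj t 2 p q ->
  [/\ `|p ord0 - q ord0| <= 1, `|p o1 - q o1| <= 1,
      (p ord0 != q ord0) || (p o1 != q o1) & ((p ord0 != q ord0) + (p o1 != q o1) <= t)%N].
Proof.
move=> [ne [hn hc]]; rewrite card_I2 in hc; split => //.
by case: (ne_coord _ _ ne) => /eqP h; rewrite h ?orbT.
Qed.

Lemma kadj1_2 (p q : pt 2) : kadj 1 2 p q ->
  [/\ `|p ord0 - q ord0| <= 1, `|p o1 - q o1| <= 1 &
      ((p ord0 = q ord0 /\ p o1 <> q o1) \/ (p ord0 <> q ord0 /\ p o1 = q o1))].
Proof.
case/kadj2 => h1 h2 h3 h4; split => //.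
move: h3 h4; case: eqP; case: eqP => //= a b _ _; by [left | right].
Qed.

Lemma allI2 (P : 'I_2 -> Prop) : P ord0 -> P o1 -> forall j, P j.
Proof.
move=> h0 h1 -[[|[|n]] Hn].
- by have -> : Ordinal Hn = ord0 by apply/val_inj.
- by have -> : Ordinal Hn = o1 by apply/val_inj.
- by [].
Qed.

Lemma L (a0 b0 a1 b1 a2 b2 a3 b3 : int) :
 -1 <= a0 - a1 <= 1 -> -1 <= b0 - b1 <= 1 ->
 -1 <= a1 - a2 <= 1 -> -1 <= b1 - b2 <= 1 ->
 -1 <= a2 - a3 <= 1 -> -1 <= b2 - b3 <= 1 ->
 -1 <= a3 - a0 <= 1 -> -1 <= b3 - b0 <= 1 ->
 (a0 = a1 /\ b0 <> b1 \/ a0 <> a1 /\ b0 = b1) ->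
 (a1 = a2 /\ b1 <> b2 \/ a1 <> a2 /\ b1 = b2) ->
 (a2 = a3 /\ b2 <> b3 \/ a2 <> a3 /\ b2 = b3) ->
 (a3 = a0 /\ b3 <> b0 \/ a3 <> a0 /\ b3 = b0) ->
 (a0 <> a2 \/ b0 <> b2) -> (a1 <> a3 \/ b1 <> b3) ->
 -1 <= a0 - a2 <= 1 /\ -1 <= b0 - b2 <= 1.
Proof.
move=> ? ? ? ? ? ? ? ? [[? ?]|[? ?]] [[? ?]|[? ?]] [[? ?]|[? ?]] [[? ?]|[? ?]] d1 d2; lia.
Qed.

Theorem mainTheorem7 (X Y : pt 2 -> Prop) :
  is_SC 1 2 4 X -> is_SC 2 2 6 Y ->
  forall t : nat, (1 <= t <= 4)%N -> ~ normal_adj t 2 2 1 2 X Y.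
Proof.
move=> [_ [y [yinj [yX yadj]]]] [_ [z [zinj [zY zadj]]]] t /andP[t1 t4] N.
pose a0 : 'I_4 := ord0. pose a1 : 'I_4 := @Ordinal 4 1 isT.
pose a2 : 'I_4 := @Ordinal 4 2 isT. pose a3 : 'I_4 := @Ordinal 4 3 isT.
pose b0 : 'I_6 := ord0. pose b1 : 'I_6 := @Ordinal 6 1 isT.
have mX i : X (y i) by apply/yX; exists i.
have mY i : Y (z i) by apply/zY; exists i.
case: (leqP t 1) => ht.
- have hx : kadj 1 2 (y a0) (y a1) by apply/(yadj a0 a1); right.
  have hz : kadj 2 2 (z b0) (z b1) by apply/(zadj b0 b1); right.
  have neq : (y a0, z b0) <> (y a1, z b1).
    by case => h _; case: hx => ne _; exact: ne h.
  have := (N (y a0) (z b0) (y a1) (z b1) (mX _) (mY _) (mX _) (mY _) neq).2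
    (or_intror (or_intror (conj hx hz))).
  move=> [_ [_ hc]]; rewrite card_cat in hc.
  case: (kadj2 _ _ _ hx) => _ _ hx1 _; case: (kadj2 _ _ _ hz) => _ _ hz1 _.
  move: hc hx1 hz1.
  case: (y a0 ord0 != y a1 ord0); case: (y a0 o1 != y a1 o1);
  case: (z b0 ord0 != z b1 ord0); case: (z b0 o1 != z b1 o1) => //=; lia.
- have h01 : kadj 1 2 (y a0) (y a1) by apply/(yadj a0 a1); right.
  have h12 : kadj 1 2 (y a1) (y a2) by apply/(yadj a1 a2); right.
  have h23 : kadj 1 2 (y a2) (y a3) by apply/(yadj a2 a3); right.
  have h30 : kadj 1 2 (y a3) (y a0) by apply/(yadj a3 a0); right.
  have n02 : y a0 <> y a2 by move/yinj.
  have n13 : y a1 <> y a3 by move/yinj.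
  case/kadj1_2: h01 => c1 c2 c3; case/kadj1_2: h12 => c4 c5 c6.
  case/kadj1_2: h23 => c7 c8 c9; case/kadj1_2: h30 => c10 c11 c12.
  move: c1 c2 c4 c5 c7 c8 c10 c11; rewrite !ler_norml => c1 c2 c4 c5 c7 c8 c10 c11.
  have [e0 e1] := L _ _ _ _ _ _ _ _ c1 c2 c4 c5 c7 c8 c10 c11 c3 c6 c9 c12
     (ne_coord _ _ n02) (ne_coord _ _ n13).
  have K : kadj t (2 + 2) (cat_pt 2 2 (y a0) (z b0)) (cat_pt 2 2 (y a2) (z b0)).
    split; [ | split].
    - case: (ne_coord _ _ n02) => d h.
        by apply: d; move: h => /(congr1 (fun f => f (lshift 2 ord0))); rewrite !cat_l.
      by apply: d; move: h => /(congr1 (fun f => f (lshift 2 o1))); rewrite !cat_l.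
    - apply: norm_cat; apply: allI2; rewrite ?ler_norml ?subrr //.
    - rewrite card_cat !eqxx /=; case: (_ != _); case: (_ != _) => /=; lia.
  have neq : (y a0, z b0) <> (y a2, z b0) by move=> [h]; exact: n02 h.
  case: ((N _ _ _ _ (mX a0) (mY b0) (mX a2) (mY b0) neq).1 K).
    by case => h _; exact: n02 h.
  case => [[_ h] | [_ [h _]]]; [ by case: ((yadj a0 a2).1 h) => /eqP | by case: h ].
Qed.
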